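(* Let $f\in D$ and let $x\in V\setminus D$ with $l(x)\ge l(f)$. If there is a path $P$ in $G$ between $x$ and $f$ that contains no vertex of $D$ other than $f$, then there is a vertex $w\in V(H)$ such that $\delta_{G-D}(x,w)\le(2k-1)|P|$.
   Context: $G=(V,E)$ is an undirected graph with $n\ge3$ vertices and real edge weights in $[1,W]$; shortest paths in every subgraph are assumed unique; $\delta_{G'}$ denotes distance in a graph $G'$, $|P|$ the weighted length of a path $P$, and $G-R$ the graph with the vertex set $R$ deleted. Let $k=\ln n$. For $R\subseteq V$, $S\subseteq V\setminus R$, an $S$-restricted tree cover of $G-R$ is a family $\{T(w):w\in S\}$ of trees, $T(w)$ a subtree of $G-R$ rooted at $w$, such that (i) for all $u\in S$, $v\in V\setminus R$ there is $w\in S$ with $u,v\in V(T(w))$ and $\mathrm{dep}_{T(w)}(u)+\mathrm{dep}_{T(w)}(v)\le(2k-1)\delta_{G-R}(u,v)$ ($\mathrm{dep}_T(x)$ = weighted distance from $x$ to the root); (ii) each vertex lies in at most $kn^{1/k}(\ln n+1)$ trees. A vertex of such a tree $T$ is a trunk vertex if it lies on the $T$-path between two vertices of $S$; $\mathrm{Trunk}(T)$ is the subtree induced by trunk vertices; $\mathrm{pdeg}_T(v)$ is the degree of $v$ in $\mathrm{Trunk}(T)$ (0 if not trunk). Fix an integer $d\ge2$, a constant $c\ge1$, $s=4e d^{c+1}\ln^2 n+1$; $\mathrm{Hi}(\mathcal{C})$ is the set of vertices of pseudo-degree $>s$ in some tree of a tree cover $\mathcal{C}$. Fixed tree covers: $\mathcal{T}(S)$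 ($S$-restricted, of $G$) and $\mathcal{T}_R(S)$ ($(S\setminus R)$-restricted, of $G-R$), with $\mathcal{T}_\varnothing(S)=\mathcal{T}(S)$. Hierarchy tree: root $V$; a node $U$ is a leaf if $\mathrm{Hi}(\mathcal{T}(U))=\varnothing$, else it has children $W_1=\mathrm{Hi}(\mathcal{T}(U))$, $W_i=W_{i-1}\cup\mathrm{Hi}(\mathcal{T}_{W_{i-1}}(U))$ ($2\le i\le d$), recursively. Let $D\subseteq V$, $|D|\le d$, be the set of failed vertices, and fix a root-to-node path $V=U_1,U_2,\dots,U_p$ in the hierarchy tree, with $U_{p+1}=\varnothing$, such that every $f\in D$ has pseudo-degree at most $s$ in every tree of $\mathcal{T}:=\bigcup_{i=1}^p\mathcal{T}_{U_{i+1}}(U_i)$. The level $l(v)$ of $v\in V$ is the largest $l$ with $v\in U_l$. Let $s_0,t_0\in V\setminus D$ be two query vertices. For $f\in D$ and $T\in\mathcal{T}$ with $f\in V(T)$, let $N_T(f)=\{\mathrm{parent}_T(f)\}\cup(\mathrm{children}_T(f)\cap\mathrm{Trunk}(T))$ (the parent term omitted if $f$ is the root), $N(f)=\bigcup_{T\in\mathcal{T},\,f\in V(T)}N_T(f)$, and $V(H)=\big(\{s_0,t_0\}\cup\bigcup_{f\in D}N(f)\big)\setminus D$. *)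

(* Defs.v *)
From HB Require Import structures.
From mathcomp Require Import all_boot all_order all_algebra.
From mathcomp Require Import all_classical all_reals.
From mathcomp Require Import ereal sequences exp.
Set Implicit Arguments. Unset Strict Implicit. Unset Printing Implicit Defensive.
Import Order.TTheory GRing.Theory Num.Theory.
Local Open Scope ring_scope.

Section Defs.
Variables (R : realType) (V : finType).

(** The graph: a symmetric irreflexive edge relation [E] and a weight
    function [wt] (only its values on edges matter). *)

Fixpoint wlen (wt : V -> V -> R) (u : V) (p : seq V) : R :=
  if p is v :: p' then wt u v + wlen wt v p' else 0.

(** [p] describes a walk [u :: p] in G - Rm from u to v *)
Definition walk_in (E : rel V) (Rm : {set V}) (u v : V) (p : seq V) : Prop :=
  [/\ path E u p, last u p = v & all (fun y => y \notin Rm) (u :: p)].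

Definition spath_in (E : rel V) (Rm : {set V}) (u v : V) (p : seq V) : Prop :=
  walk_in E Rm u v p /\ uniq (u :: p).

(** delta_{G - Rm}(u, v), in the extended reals (+oo if disconnected) *)
Definition dist (E : rel V) (wt : V -> V -> R) (Rm : {set V}) (u v : V)
  : \bar R :=
  ereal_inf [set ((wlen wt u p)%:E) | p in [set p | walk_in E Rm u v p]].

Definition kk : R := ln (#|V|%:R).

(** A rooted tree, given by vertex set, root and parent function
    (the parent function matters only on non-root tree vertices). *)
Record rtree := RTree { tv : {set V}; troot : V; tpar : V -> V }.

Definition is_subtree (E : rel V) (Rm : {set V}) (w : V) (T : rtree) : Prop :=
  [/\ troot T = w, w \in tv T, tv T \subset ~: Rm,
      (forall v, v \in tv T -> v != w -> tpar T v \in tv T /\ E v (tpar T v))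
    & (forall v, v \in tv T -> exists i, iter i (tpar T) v = w)].

Definition hgt (T : rtree) (v : V) : nat :=
  find (fun i => iter i (tpar T) v == troot T) (iota 0 #|V|).

Definition dep (wt : V -> V -> R) (T : rtree) (v : V) : R :=
  \sum_(i < hgt T v) wt (iter i (tpar T) v) (iter i.+1 (tpar T) v).

Definition tadj (T : rtree) : rel V := fun x y =>
  [&& x \in tv T, y \in tv T &
      ((x != troot T) && (tpar T x == y)) || ((y != troot T) && (tpar T y == x))].

Definition trunk (S : {set V}) (T : rtree) (v : V) : bool :=
  `[< exists a b (p : seq V),
        [/\ [&& a \in S, b \in S, a \in tv T & b \in tv T],
            path (tadj T) a p, last a p = b, uniq (a :: p)
          & v \in a :: p] >].

Definition pdeg (S : {set V}) (T : rtree) (v : V) : nat :=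
  if trunk S T v then #|[set y | tadj T v y && trunk S T y]| else 0.

Definition tree_cover (E : rel V) (wt : V -> V -> R) (Rm S : {set V})
    (C : V -> rtree) : Prop :=
  [/\ (forall w, w \in S -> is_subtree E Rm w (C w)),
      (forall u v, u \in S -> v \notin Rm ->
         (dist E wt Rm u v < +oo)%E ->
         exists2 w, w \in S &
           [/\ u \in tv (C w), v \in tv (C w) &
               ((dep wt (C w) u + dep wt (C w) v)%:E
                  <= ((2 * kk - 1)%:E * dist E wt Rm u v))%E])
    & (forall v, (#|[set w in S | v \in tv (C w)]|%:R : R)
                 <= kk * (#|V|%:R `^ (kk^-1)) * (ln (#|V|%:R) + 1))].

Definition sth (d : nat) (c : R) : R :=
  4 * expR 1 * (d%:R `^ (c + 1)) * (ln (#|V|%:R)) ^+ 2 + 1.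

(** The family of tree covers: [TC Rm S] is T_Rm(S), whose trees are
    [TC Rm S w] for w in S :\: Rm; T(S) = T_set0(S). *)

Definition Hi (s : R) (TC : {set V} -> {set V} -> V -> rtree)
    (Rm S : {set V}) : {set V} :=
  [set v | [exists w in S :\: Rm, s < (pdeg (S :\: Rm) (TC Rm S w) v)%:R]].

Fixpoint Wc (s : R) TC (U : {set V}) (i : nat) : {set V} :=
  match i with
  | 0 => finset.set0 (* unused *)
  | 1 => Hi s TC finset.set0 U
  | i'.+1 => Wc s TC U i' :|: Hi s TC (Wc s TC U i') U
  end.

Definition hchild (s : R) TC (d : nat) (U U' : {set V}) : Prop :=
  Hi s TC finset.set0 U != finset.set0 /\ exists2 i, (1 <= i <= d)%N & U' = Wc s TC U i.

Definition lvl (U : nat -> {set V}) (p : nat) (v : V) : nat :=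
  \max_(1 <= l < p.+1 | v \in U l) l.

Definition NT (S : {set V}) (T : rtree) (f : V) : {set V} :=
  (if f != troot T then [set tpar T f] else finset.set0) :|:
  [set y | [&& y \in tv T, y != troot T, tpar T y == f & trunk S T y]].

Definition Nf TC (U : nat -> {set V}) (p : nat) (f : V) : {set V} :=
  \bigcup_(i < p.+1 | (1 <= i)%N)
    \bigcup_(w in U i :\: U i.+1 | f \in tv (TC (U i.+1) (U i) w))
       NT (U i :\: U i.+1) (TC (U i.+1) (U i) w) f.

Definition VH TC (U : nat -> {set V}) (p : nat) (D : {set V}) (s0 t0 : V)
  : {set V} :=
  ([set s0; t0] :|: \bigcup_(f in D) Nf TC U p f) :\: D.

End Defs.

(* Main.v *)
Require Import Defs.
From HB Require Import structures.
From mathcomp Require Import all_boot all_order all_algebra.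
From mathcomp Require Import all_classical all_reals.
From mathcomp Require Import ereal sequences exp.
From mathcomp Require Import zify ring lra.
Import Order.TTheory GRing.Theory Num.Theory.
Local Open Scope ring_scope.
Lemma e_le3 (R : realType) : expR (1:R) <= 3.
Proof.
set a := expR (-(1/8):R).
have h1 : 7/8 <= a by have := expR_ge1Dx (-(1/8):R); rewrite -/a; lra.
have h2 : expR (-1:R) = a ^+ 8.
  rewrite /a -expRM_natl; congr expR; rewrite mulrN mul1r mulfV //.
have hb : 49/64 <= a ^+ 2 by rewrite expr2; nra.
have hc : 7/12 <= a ^+ 4.
  have -> : a ^+ 4 = a ^+ 2 * a ^+ 2 by rewrite -exprD.
  move: hb; set b := a ^+ 2; nra.
have hd : 1/3 <= a ^+ 8.
  have -> : a ^+ 8 = a ^+ 4 * a ^+ 4 by rewrite -exprD.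
  move: hc; set b := a ^+ 4; nra.
rewrite -h2 in hd.
have hN : expR (-1:R) * expR 1 = 1 by rewrite expRN mulVf // gt_eqF // expR_gt0.
have hp : 0 < expR (1:R) := expR_gt0 1.
nra.
Qed.

Lemma kk_ge1 (R : realType) (V : finType) : (3 <= #|V|)%N -> 1 <= kk R V.
Proof.
move=> H3; rewrite /kk -{1}(expRK (1:R)).
rewrite ler_ln ?posrE ?expR_gt0 //; last by rewrite ltr0n; lia.
apply: le_trans (e_le3 R) _.
by rewrite (ler_nat R 3).
Qed.

Set Implicit Arguments. Unset Strict Implicit.
Ltac nlia := repeat match goal with
  | H : is_true (_ <= _)%N |- _ => revert H
  | H : is_true ((_ <= _)%N && (_ <= _)%N) |- _ => revert H
  | H : @eq nat _ _ |- _ => revert H end; clear; intros; lia.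

Section Walks.
Variables (R : realType) (V : finType) (E : rel V) (wt : V -> V -> R).

Lemma wlen_cat u p q : wlen wt u (p ++ q) = wlen wt u p + wlen wt (last u p) q.
Proof. by elim: p u => [|a p IH] u /=; [rewrite add0r | rewrite IH addrA]. Qed.

Lemma wlen_ge0 u p : (forall a b, E a b -> 1 <= wt a b) ->
  path E u p -> 0 <= wlen wt u p.
Proof.
move=> wp; elim: p u => [|a p IH] u //= /andP[Ha Hp].
apply: addr_ge0; [exact: le_trans ler01 (wp _ _ Ha) | exact: IH].
Qed.

Lemma walk_cat Rm a b c p q : walk_in E Rm a b p -> walk_in E Rm b c q ->
  walk_in E Rm a c (p ++ q).
Proof.
move=> [p1 l1 a1] [p2 l2 a2]; split.
- by rewrite cat_path p1 l1 p2.
- by rewrite last_cat l1.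
- by rewrite -cat_cons all_cat a1 /=; move: a2 => /= /andP[_ ->].
Qed.

Lemma last_rev_belast (a : V) p : last (last a p) (rev (belast a p)) = a.
Proof.
have H : last a p :: rev (belast a p) = rcons (rev p) a.
  by rewrite -rev_rcons -lastI rev_cons.
by have := congr1 (last a) H; rewrite /= last_rcons.
Qed.

Lemma wlen_rev a p : (forall u v, wt u v = wt v u) ->
  wlen wt (last a p) (rev (belast a p)) = wlen wt a p.
Proof.
move=> ws; elim: p a => [|y p IH] a //=.
rewrite rev_cons -cats1 wlen_cat IH last_rev_belast /= addr0 addrC ws //.
Qed.

Lemma walk_rev Rm a b p : symmetric E -> walk_in E Rm a b p ->
  walk_in E Rm b a (rev (belast a p)).
Proof.
move=> Es [p1 l1 a1]; split.
- rewrite -l1 rev_path (@eq_path _ _ E) // => y z /=; exact: Es.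
- by rewrite -l1 last_rev_belast.
- have H : last a p :: rev (belast a p) = rev (a :: p).
    by rewrite -rev_rcons -lastI.
  by rewrite -l1 H all_rev.
Qed.

Lemma dist_le Rm a b p : walk_in E Rm a b p ->
  (dist E wt Rm a b <= (wlen wt a p)%:E)%E.
Proof. by move=> H; apply: ereal_inf_lbound; exists p. Qed.

End Walks.
Lemma find_iota_eq (P : pred nat) n k m : (n < m)%N ->
  (forall i, (i < n)%N -> ~~ P (k + i)%N) -> P (k + n)%N -> find P (iota k m) = n.
Proof.
elim: n k m => [|n IH] k [|m] //= Hnm Hb Hp.
- by rewrite addn0 in Hp; rewrite Hp.
- have := Hb 0%N isT; rewrite addn0 => /negbTE ->.
  congr S; apply: IH => //.
  + by move=> i Hi; rewrite addSnnS; apply: Hb.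
  + by rewrite addSnnS.
Qed.

Section Tree.
Variables (R : realType) (V : finType) (E : rel V) (wt : V -> V -> R).
Variables (Rm : {set V}) (w : V) (T : rtree V).
Hypothesis HT : is_subtree E Rm w T.
Hypothesis wpos : forall a b, E a b -> 1 <= wt a b.
Local Notation par := (tpar T).

Lemma root_eq : troot T = w. Proof. by case: HT. Qed.

Lemma hgt_spec v : v \in tv T ->
  [/\ iter (hgt T v) par v = w, (forall i, (i < hgt T v)%N -> iter i par v != w),
      (forall i, (i <= hgt T v)%N -> iter i par v \in tv T) &
      uniq [seq iter i par v | i <- iota 0 (hgt T v).+1]].
Proof.
case: HT => Hr Hw Hsub Hpar Hreach Hv.
have ex : exists n, iter n par v == w.
  by case: (Hreach v Hv) => n Hn; exists n; apply/eqP.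
case: (ex_minnP ex) => n /eqP Hn Hmin.
have Hlt : forall i, (i < n)%N -> iter i par v != w.
  move=> i Hi; apply/negP => /Hmin; by rewrite leqNgt Hi.
have Hin : forall i, (i <= n)%N -> iter i par v \in tv T.
  elim=> [|i IH] Hi //=.
  by case: (Hpar _ (IH (ltnW Hi)) (Hlt _ Hi)).
have Hu : uniq [seq iter i par v | i <- iota 0 n.+1].
  rewrite map_inj_in_uniq ?iota_uniq // => i j; rewrite !mem_iota !add0n /= => Hi Hj Heq.
  wlog Hij : i j Hi Hj Heq / (i <= j)%N.
    move=> W; case: (leqP i j) => H; first exact: W.
    by apply/esym/W => //; apply: ltnW.
  apply/eqP; rewrite eqn_leq Hij /=; rewrite leqNgt; apply/negP => Hlt'.
  have : iter (n - j + i) par v = w.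
    by rewrite iterD Heq -iterD subnK // -ltnS.
  apply/eqP; apply: Hlt; lia.
have Hc : (n < #|V|)%N.
  move/card_uniqP: Hu; rewrite size_map size_iota => <-.
  exact: max_card.
have Hh : hgt T v = n.
  rewrite /hgt; apply: find_iota_eq => //.
  - by move=> i Hi; rewrite add0n Hr; apply: Hlt.
  - by rewrite add0n Hr Hn.
by rewrite Hh; split.
Qed.

Definition up (v : V) a m := [seq iter i par v | i <- iota a.+1 m].

Lemma up_path (e : rel V) v a m :
  (forall i, (a <= i < a + m)%N -> e (iter i par v) (iter i.+1 par v)) ->
  path e (iter a par v) (up v a m).
Proof.
elim: m a => [|m IH] a H //=.
apply/andP; split; first by apply: H; lia.
apply: IH => i Hi; apply: H; lia.
Qed.

Lemma up_last v a m : last (iter a par v) (up v a m) = iter (a + m) par v.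
Proof.
elim: m a => [|m IH] a /=; first by rewrite addn0.
rewrite -addSnnS; exact: IH a.+1.
Qed.

Lemma up_wlen v a m : wlen wt (iter a par v) (up v a m) =
  \sum_(a <= i < a + m) wt (iter i par v) (iter i.+1 par v).
Proof.
elim: m a => [|m IH] a /=; first by rewrite addn0 big_geq.
rewrite (IH a.+1) (big_ltn (m := a)); last lia.
by rewrite addSnnS.
Qed.

Lemma up_mem v a m z : z \in iter a par v :: up v a m ->
  exists2 i, (a <= i <= a + m)%N & z = iter i par v.
Proof.
rewrite inE => /orP [/eqP -> | /mapP [i Hi ->]]; first by exists a => //; lia.
by exists i => //; move: Hi; rewrite mem_iota; lia.
Qed.

Lemma up_memI v a m i : (a <= i <= a + m)%N -> iter i par v \in iter a par v :: up v a m.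
Proof.
move=> Hi; rewrite inE; case: (eqVneq i a) => [-> | Hne]; first by rewrite eqxx.
apply/orP; right; apply: map_f; rewrite mem_iota; lia.
Qed.

Lemma F_ge0 v i : v \in tv T -> (i < hgt T v)%N ->
  0 <= wt (iter i par v) (iter i.+1 par v).
Proof.
move=> Hv Hi; case: (hgt_spec Hv) => _ Hlt Hin _.
case: HT => _ _ _ Hpar _.
case: (Hpar _ (Hin _ (ltnW Hi)) (Hlt _ Hi)) => _ He.
have h1 := wpos He; have h0 : (0:R) <= 1 by [].
exact: le_trans h0 h1.
Qed.

Lemma tedge v i : v \in tv T -> (i < hgt T v)%N ->
  E (iter i par v) (iter i.+1 par v).
Proof.
move=> Hv Hi; case: (hgt_spec Hv) => _ Hlt Hin _.
case: HT => _ _ _ Hpar _.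
by case: (Hpar _ (Hin _ (ltnW Hi)) (Hlt _ Hi)).
Qed.

Lemma dep_sub v a b : v \in tv T -> (a <= b <= hgt T v)%N ->
  \sum_(a <= i < b) wt (iter i par v) (iter i.+1 par v) <= dep wt T v.
Proof.
move=> Hv /andP[Hab Hbh].
have H0 : forall a' b', (b' <= hgt T v)%N ->
    0 <= \sum_(a' <= i < b') wt (iter i par v) (iter i.+1 par v).
  move=> a' b' Hb'; rewrite big_nat_cond; apply: sumr_ge0 => i /andP[/andP[_ Hi] _].
  apply: F_ge0 => //; exact: leq_trans Hi Hb'.
rewrite /dep -(big_mkord xpredT (fun i => wt (iter i par v) (iter i.+1 par v))).
rewrite (big_cat_nat (leq0n a) (leq_trans Hab Hbh)) (big_cat_nat Hab Hbh) /=.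
have := H0 0%N a (leq_trans Hab Hbh); have := H0 b (hgt T v) (leqnn _); lra.
Qed.

Lemma dep_ge0 v : v \in tv T -> 0 <= dep wt T v.
Proof.
move=> Hv; apply: le_trans (@dep_sub v 0%N 0%N Hv _) => //.
by rewrite big_geq.
Qed.

End Tree.

Section Escape.
Variables (R : realType) (V : finType) (E : rel V) (wt : V -> V -> R).
Variables (Rm : {set V}) (w : V) (T : rtree V).
Hypothesis HT : is_subtree E Rm w T.
Hypothesis wpos : forall a b, E a b -> 1 <= wt a b.
Hypothesis wsym : forall a b, wt a b = wt b a.
Hypothesis Es : symmetric E.
Local Notation par := (tpar T).

Lemma tree_escape (S D : {set V}) u f :
  w \in S -> u \in S -> u \in tv T -> f \in tv T -> u \notin D -> f \in D ->
  exists g, exists w', exists q,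
    [/\ g \in D, g \in tv T, w' \in NT S T g, walk_in E D u w' q &
        wlen wt u q <= dep wt T u + dep wt T f].
Proof.
move=> wS uS ut ft uD fD.
have Hr := root_eq HT.
case: (hgt_spec HT ut) => Hu1 Hu2 Hu3 Hu4.
case: (hgt_spec HT ft) => Hf1 Hf2 Hf3 Hf4.
have wt_ : w \in tv T by case: HT.
have upw : forall v a m, v \in tv T -> (a + m <= hgt T v)%N ->
   (forall i, (a <= i <= a + m)%N -> iter i par v \notin D) ->
   walk_in E D (iter a par v) (iter (a + m) par v) (up T v a m).
  move=> v a m vt Ham HD; split.
  - apply: up_path => i /andP[_ Hi]; apply: (tedge HT) => //; exact: leq_trans Hi Ham.
  - exact: up_last.
  - apply/allP => z /up_mem [i Hi ->]; exact: HD.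
case: (boolP [exists i : 'I_(hgt T u).+1, iter i par u \in D]) =>
   [/existsP [i0 Hi0] | /existsPn Hno].
- have ex : exists i, (i <= hgt T u)%N && (iter i par u \in D).
    by exists i0; rewrite Hi0 -ltnS ltn_ord.
  case: (ex_minnP ex) => m /andP[Hm HmD] Hmin.
  case: m Hm HmD Hmin => [|m'] Hm HmD Hmin; first by rewrite /= HmD in uD.
  have Hmin' : forall i, (i <= m')%N -> iter i par u \notin D.
    move=> i Hi; apply/negP => HiD; have := Hmin i; rewrite HiD andbT => H.
    have : (i <= hgt T u)%N by nlia.
    move/H; nlia.
  exists (iter m'.+1 par u), (iter m' par u), (up T u 0 m'); split => //.
  + exact: Hu3.
  + rewrite /NT inE; apply/orP; right; rewrite inE.
    apply/and4P; split.
    * apply: Hu3; nlia.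
    * rewrite Hr; apply: Hu2; nlia.
    * by [].
    * apply/asboolP; exists u, w, (up T u 0 (hgt T u)); split.
      -- by rewrite uS wS ut wt_.
      -- apply: up_path => i Hi; rewrite /tadj; apply/and3P; split;
           [apply: Hu3; nlia | apply: Hu3; nlia | ].
         apply/orP; left; rewrite Hr Hu2 /=; [by [] | nlia].
      -- by move: (up_last T u 0 (hgt T u)); rewrite add0n Hu1 => H; exact: H.
      -- exact: Hu4.
      -- apply: (@up_memI _ T u 0%N); nlia.
  + have := upw u 0%N m' ut; rewrite add0n; apply; first nlia.
    by move=> i Hi; apply: Hmin'; nlia.
  + have dep_u := dep_ge0 HT wpos ut; have dep_f := dep_ge0 HT wpos ft.
    rewrite (up_wlen wt T u 0 m') add0n.
    have h1 := @dep_sub _ _ _ _ _ _ _ HT wpos u 0%N m' ut.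
    have h2 : (0 <= m' <= hgt T u)%N by nlia.
    have := h1 h2; lra.
- have Hno' : forall i, (i <= hgt T u)%N -> iter i par u \notin D.
    by move=> i Hi; exact: (Hno (@Ordinal (hgt T u).+1 i Hi)).
  have wD : w \notin D by rewrite -Hu1; exact: Hno'.
  have ex : exists i, (i <= hgt T f)%N && (iter i par f \in D).
    by exists 0%N; rewrite leq0n.
  have bnd : forall i, (i <= hgt T f)%N && (iter i par f \in D) -> (i <= hgt T f)%N.
    by move=> i /andP[].
  case: (ex_maxnP ex bnd) => m /andP[Hm HmD] Hmax.
  have Hmlt : (m < hgt T f)%N.
    rewrite ltn_neqAle Hm andbT; apply/eqP => Heq.
    by move: HmD; rewrite Heq Hf1 (negbTE wD).
  have Hl : last (iter m.+1 par f) (up T f m.+1 (hgt T f - m.+1)) = w.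
    by rewrite up_last subnKC // Hf1.
  exists (iter m par f), (iter m.+1 par f),
    (up T u 0 (hgt T u) ++ rev (belast (iter m.+1 par f) (up T f m.+1 (hgt T f - m.+1)))).
  split => //.
  + apply: Hf3; nlia.
  + rewrite /NT inE; apply/orP; left; rewrite Hr (Hf2 _ Hmlt) inE //.
  + have W1 : walk_in E D u w (up T u 0 (hgt T u)).
      have := upw u 0%N (hgt T u) ut; rewrite add0n Hu1; apply => //;
      by move=> i Hi; apply: Hno'; nlia.
    have W2 : walk_in E D (iter m.+1 par f) w (up T f m.+1 (hgt T f - m.+1)).
      have := upw f m.+1 (hgt T f - m.+1)%N ft; rewrite subnKC // Hf1; apply; first nlia.
      move=> i Hi; apply/negP => HiD.
      have : (i <= hgt T f)%N && (iter i par f \in D) by rewrite HiD andbT; nlia.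
      move/Hmax; nlia.
    exact: walk_cat W1 (walk_rev Es W2).
  + have dep_u := dep_ge0 HT wpos ut; have dep_f := dep_ge0 HT wpos ft.
    rewrite wlen_cat.
    have -> : last u (up T u 0 (hgt T u)) = w.
      by move: (up_last T u 0 (hgt T u)); rewrite add0n Hu1 => H; exact: H.
    rewrite -{1}Hl wlen_rev // (up_wlen wt T u 0) (up_wlen wt T f m.+1) add0n.
    have h1 := @dep_sub _ _ _ _ _ _ _ HT wpos u 0%N (hgt T u) ut (leqnn _).
    have h2 := @dep_sub _ _ _ _ _ _ _ HT wpos f m.+1 (m.+1 + (hgt T f - m.+1))%N ft.
    have h3 : (m.+1 <= m.+1 + (hgt T f - m.+1) <= hgt T f)%N by nlia.
    have := h2 h3; lra.
Qed.

End Escape.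

Lemma seq_argmax (T : eqType) (F : T -> nat) (x0 : T) s :
  exists2 y, y \in x0 :: s & forall z, z \in x0 :: s -> (F z <= F y)%N.
Proof.
elim: s x0 => [|a s IH] x0.
  by exists x0 => [|z]; rewrite ?inE ?eqxx // => /eqP ->.
case: (IH a) => y Hy Hmax.
case: (leqP (F x0) (F y)) => H.
- exists y; first by rewrite inE Hy orbT.
  by move=> z; rewrite inE => /orP[/eqP -> // | /Hmax].
- exists x0; first by rewrite inE eqxx.
  move=> z; rewrite inE => /orP[/eqP -> // | /Hmax Hz].
  exact: leq_trans Hz (ltnW H).
Qed.

Theorem lemma3p5 (R : realType) (V : finType) (E : rel V)
  (wt : V -> V -> R) (Wmax : R) (d : nat) (c : R)
  (TC : {set V} -> {set V} -> V -> rtree V)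
  (p : nat) (U : nat -> {set V}) (D : {set V}) (s0 t0 f x : V) (P : seq V) :
  (3 <= #|V|)%N ->
  symmetric E -> irreflexive E ->
  (forall u v, wt u v = wt v u) ->
  (forall u v, E u v -> 1 <= wt u v <= Wmax) ->
  (* shortest paths in every subgraph G - Rm are unique *)
  (forall (Rm : {set V}) (u v : V) (p1 p2 : seq V),
     spath_in E Rm u v p1 -> spath_in E Rm u v p2 ->
     (wlen wt u p1)%:E = dist E wt Rm u v ->
     (wlen wt u p2)%:E = dist E wt Rm u v -> p1 = p2) ->
  (2 <= d)%N -> 1 <= c ->
  (* the fixed tree covers: T_Rm(S) is an (S \ Rm)-restricted cover of G - Rm *)
  (forall Rm S : {set V}, tree_cover E wt Rm (S :\: Rm) (TC Rm S)) ->
  (* a root-to-node path U_1 = V, ..., U_p in the hierarchy tree *)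
  (1 <= p)%N -> U 1%N = [set: V] ->
  (forall i, (1 <= i < p)%N -> hchild (sth V d c) TC d (U i) (U i.+1)) ->
  U p.+1 = finset.set0 ->
  (* the failed set D *)
  (#|D| <= d)%N ->
  (forall g i w, g \in D -> (1 <= i <= p)%N -> w \in U i :\: U i.+1 ->
     (pdeg (U i :\: U i.+1) (TC (U i.+1) (U i) w) g)%:R <= sth V d c) ->
  s0 \notin D -> t0 \notin D ->
  f \in D -> x \notin D ->
  (lvl U p f <= lvl U p x)%N ->
  (* P is a path in G from x to f containing no vertex of D other than f *)
  spath_in E finset.set0 x f P ->
  (forall y, y \in x :: P -> y \in D -> y = f) ->
  exists2 w, w \in VH TC U p D s0 t0 &
    (dist E wt D x w <= ((2 * kk R V - 1) * wlen wt x P)%:E)%E.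
Proof.
move=> HV Es _ ws wb _ _ _ Hcov Hp1 U1 _ Up1 _ _ _ _ fD xD Hlvl [[Pp Pl Pall] Puniq] PD.
have wpos : forall a b, E a b -> 1 <= wt a b by move=> a b /wb /andP[].
have Hk := kk_ge1 R V HV.
have L1 : forall v l, (1 <= l <= p)%N -> v \in U l -> (l <= lvl U p v)%N.
  move=> v l Hl Hv; rewrite /lvl.
  apply: (@leq_bigmax_seq _ _ _ (fun l => l) l) => //; rewrite mem_index_iota; nlia.
have L2 : forall v, [/\ (1 <= lvl U p v)%N, (lvl U p v <= p)%N & v \in U (lvl U p v)].
  move=> v.
  have H1 : (1 <= lvl U p v)%N by apply: L1; [nlia | rewrite U1 inE].
  have : (lvl U p v == 0)%N || ((lvl U p v <= p)%N && (v \in U (lvl U p v))).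
    rewrite /lvl big_seq_cond.
    apply: (big_ind (fun n => (n == 0)%N || ((n <= p)%N && (v \in U n)))) => //.
    - move=> a b Ha Hb; rewrite /maxn; case: ifP => _; [exact: Hb | exact: Ha].
    - move=> l /andP[Hl Hv]; rewrite mem_index_iota in Hl.
      apply/orP; right; rewrite Hv andbT; nlia.
  case/orP => [/eqP H0 | /andP[H2 H3]]; first by rewrite H0 in H1.
  by split.
case: (seq_argmax (lvl U p) x P) => y0 Hy0 Hmax0.
move Hj: (lvl U p y0) => j; rewrite Hj in Hmax0.
have [u [Hu Hlu HuD Huf]] :
    exists u, [/\ u \in x :: P, lvl U p u = j, u \notin D & u != f].
  case: (eqVneq (lvl U p x) j) => Hx.
  - exists x; split => //; first by rewrite inE eqxx.
    by apply/eqP => Exf; rewrite Exf fD in xD.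
  - have Hyf : y0 != f.
      apply/eqP => Eyf; have := Hmax0 x (mem_head _ _); rewrite -Hj Eyf in Hx *.
      move: Hx Hlvl; clear; move=> Hx Hlvl Hle.
      by move: Hx; rewrite eqn_leq Hle Hlvl.
    exists y0; split => //.
    by apply/negP => HyD; move: Hyf; rewrite (PD _ Hy0 HyD) eqxx.
have [Hj1 Hjp HuUj] := L2 u; rewrite Hlu in Hj1 Hjp HuUj.
have notU : forall z, z \in x :: P -> z \notin U j.+1.
  move=> z Hz; apply/negP => HzU.
  case: (leqP j.+1 p) => Hjp1.
  - have h1 : (1 <= j.+1 <= p)%N by rewrite Hjp1.
    have := L1 z j.+1 h1 HzU; have := Hmax0 z Hz; nlia.
  - have Hjeq : j = p by nlia.
    by move: HzU; rewrite Hjeq Up1 inE.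
clear Hy0 Hmax0 Hj.
move: Pp Pl Pall Puniq PD notU.
case/splitPl: Hu => P1 P2 HlP1 Pp Pl Pall Puniq PD notU.
rewrite cat_path HlP1 in Pp; case/andP: Pp => Pp1 Pp2.
rewrite last_cat HlP1 in Pl.
have fP2 : f \in P2.
  have := mem_last u P2; rewrite Pl inE => /orP[/eqP E1 | //].
  by rewrite E1 eqxx in Huf.
have fnot : f \notin x :: P1.
  move: Puniq; rewrite -cat_cons cat_uniq => /and3P[_ /hasPn H _].
  exact: H _ fP2.
have W1 : walk_in E D x u P1.
  split => //; apply/allP => z Hz; apply/negP => HzD.
  have Hz' : z \in x :: P1 ++ P2 by rewrite -cat_cons mem_cat Hz.
  have Ezf := PD z Hz' HzD.
  by move: fnot; rewrite -Ezf Hz.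
have W2 : walk_in E (U j.+1) u f P2.
  split => //; apply/allP => z Hz; apply: notU.
  rewrite inE in Hz; case/orP: Hz => [/eqP -> | Hz].
  - by rewrite -cat_cons mem_cat -HlP1 mem_last.
  - by rewrite -cat_cons mem_cat Hz orbT.
case: (Hcov (U j.+1) (U j)) => Hsub Hpair _.
have uS : u \in U j :\: U j.+1.
  by rewrite inE HuUj andbT; apply: notU; rewrite -cat_cons mem_cat -HlP1 mem_last.
have fR : f \notin U j.+1 by apply: notU; rewrite -cat_cons mem_cat fP2 orbT.
have Hd := dist_le wt W2.
have Hfin : (dist E wt (U j.+1) u f < +oo)%E.
  by apply: le_lt_trans Hd _; exact: ltry.
case: (Hpair u f uS fR Hfin) => w0 Hw0 [Hut Hft Hdep].
have HT := Hsub w0 Hw0.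
case: (tree_escape HT wpos ws Es Hw0 uS Hut Hft HuD fD) => g [w' [q [gD gT w'N Wq Hq]]].
have Hk0 : (0:R) <= 2 * kk R V - 1 by lra.
have Hdep' : dep wt (TC (U j.+1) (U j) w0) u + dep wt (TC (U j.+1) (U j) w0) f
    <= (2 * kk R V - 1) * wlen wt u P2.
  rewrite -lee_fin; apply: le_trans Hdep _; rewrite EFinM.
  by apply: lee_wpmul2l => //; rewrite lee_fin.
exists w'.
- rewrite /VH inE; apply/andP; split.
  + case: Wq => _ Hl Hall; move/allP: Hall => /(_ w'); rewrite -{1}Hl mem_last.
    by move=> /(_ isT).
  + rewrite inE; apply/orP; right; apply/bigcupP; exists g => //.
    rewrite /Nf; have Hjo : (j < p.+1)%N by nlia.
    apply/bigcupP; exists (Ordinal Hjo) => //=.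
    apply/bigcupP; exists w0 => //; by rewrite Hw0.
- apply: le_trans (dist_le wt (walk_cat W1 Wq)) _.
  rewrite lee_fin !wlen_cat HlP1.
  have := wlen_ge0 wpos Pp1; have := wlen_ge0 wpos Pp2.
  move: Hq Hdep' Hk; set a := wlen wt x P1; set b := wlen wt u P2; set k := kk R V.
  nra.
Qed.
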